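(* For an arbitrary finite set $\Theta$ of pairwise commuting Pauli operators, there exist two regular sets $\Theta'$ and $\Theta''$ of Pauli operators such that $\Theta'\cup\Theta''$ generates the same group as $\Theta$, i.e. $\langle\Theta'\cup\Theta''\rangle=\langle\Theta\rangle$.
   Context: Every Pauli operator $\sigma$ (with phase) on a set of qubits can be written uniquely as $\sigma=\nu\sigma_X\sigma_Z$ with $\nu\in\{\pm1,\pm i\}$, $\sigma_X$ a tensor product of Pauli $X$ and identity factors, and $\sigma_Z$ a tensor product of Pauli $Z$ and identity factors. A set $\{\sigma_1,\dots,\sigma_q\}$ of Pauli operators is regular if $\sigma_{X,i}$ commutes with $\sigma_{Z,j}$ for all $i\neq j$. *)

(* Defs.v *)
From mathcomp Require Import all_boot all_algebra.
Set Implicit Arguments. Unset Strict Implicit. Unset Printing Implicit Defensive.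
Import GRing.Theory.
Local Open Scope ring_scope.

(* (a, x, z) represents  i^a * (X^{x_1} (x) ... (x) X^{x_n}) * (Z^{z_1} (x) ... (x) Z^{z_n}) *)
Definition pauli (n : nat) : finType :=
  ('Z_4 * {ffun 'I_n -> bool} * {ffun 'I_n -> bool})%type.

Definition phase n (p : pauli n) : 'Z_4 := p.1.1.
Definition xbits n (p : pauli n) : {ffun 'I_n -> bool} := p.1.2.
Definition zbits n (p : pauli n) : {ffun 'I_n -> bool} := p.2.

Definition dotb n (u v : {ffun 'I_n -> bool}) : bool :=
  odd (\sum_(i < n) (u i && v i)).

Definition xorv n (u v : {ffun 'I_n -> bool}) : {ffun 'I_n -> bool} :=
  [ffun i => u i (+) v i].

(* product:  i^a X^x Z^z * i^b X^x' Z^z' = i^(a+b+2 z.x') X^(x+x') Z^(z+z')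
   (using Z^z X^x' = (-1)^(z.x') X^x' Z^z) *)
Definition pmul n (p q : pauli n) : pauli n :=
  (phase p + phase q + (2 * dotb (zbits p) (xbits q))%:R,
   xorv (xbits p) (xbits q), xorv (zbits p) (zbits q)).

Definition pone n : pauli n := (0, [ffun => false], [ffun => false]).

(* inverse: (i^a X^x Z^z)^-1 = Z^z X^x i^-a = i^(-a + 2 x.z) X^x Z^z *)
Definition pinv n (p : pauli n) : pauli n :=
  (- phase p + (2 * dotb (xbits p) (zbits p))%:R, xbits p, zbits p).

Definition xpart n (p : pauli n) : pauli n := (0, xbits p, [ffun => false]).
Definition zpart n (p : pauli n) : pauli n := (0, [ffun => false], zbits p).

Definition pcommute n (p q : pauli n) : Prop := pmul p q = pmul q p.

Definition regular n (S : {set pauli n}) : Prop :=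
  forall p q, p \in S -> q \in S -> p != q -> pcommute (xpart p) (zpart q).

Inductive generated n (S : {set pauli n}) : pauli n -> Prop :=
| gen_one : generated S (pone n)
| gen_in p : p \in S -> generated S p
| gen_mul p q : generated S p -> generated S q -> generated S (pmul p q)
| gen_inv p : generated S p -> generated S (pinv p).

(* Main.v *)
Require Import Defs.
Set Implicit Arguments. Unset Strict Implicit. Unset Printing Implicit Defensive.
From mathcomp Require Import all_boot all_algebra ring.
Import GRing.Theory.
Local Open Scope ring_scope.
Lemma two_xor (a b : bool) : ((2*(a (+) b))%:R : 'Z_4) = (2*a)%:R + (2*b)%:R.
Proof. by case: a; case: b; apply/val_inj. Qed.
Lemma two_inj (a b : bool) : ((2*a)%:R : 'Z_4) = (2*b)%:R -> a = b.
Proof. by case: a; case: b => // /(congr1 val). Qed.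
Lemma two_dbl (a : bool) : ((2*a)%:R : 'Z_4) + (2*a)%:R = 0.
Proof. by case: a; apply/val_inj. Qed.
Lemma oddsum n (F : 'I_n -> bool) : odd (\sum_(i<n) (F i : nat)) = \big[addb/false]_(i<n) F i.
Proof. rewrite (big_morph odd oddD (erefl _)); apply eq_bigr => i _; exact: oddb. Qed.
Lemma AC4 (R : comRingType) (a b c e f g : R) : a + (b + c + e) + (f + g) = a + b + f + c + (g + e).
Proof. ring. Qed.
Section S.
Variable n : nat.
Implicit Types (u v w : {ffun 'I_n -> bool}) (p q r g h k : pauli n).

Definition zero : {ffun 'I_n -> bool} := [ffun => false].

Lemma dotbC u v : dotb u v = dotb v u.
Proof. by rewrite /dotb; congr odd; apply eq_bigr => i _; rewrite andbC. Qed.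

Lemma dotb_xorl u v w : dotb (xorv u v) w = dotb u w (+) dotb v w.
Proof.
rewrite /dotb !oddsum -big_split /=; apply eq_bigr => i _.
by rewrite !ffunE; case: (u i); case: (v i); case: (w i).
Qed.

Lemma dotb_xorr u v w : dotb w (xorv u v) = dotb w u (+) dotb w v.
Proof. by rewrite dotbC dotb_xorl !(dotbC w). Qed.

Lemma dotb0l v : dotb [ffun => false] v = false.
Proof. by rewrite /dotb big1 // => i _; rewrite ffunE. Qed.

Lemma dotb0r v : dotb v [ffun => false] = false.
Proof. by rewrite dotbC dotb0l. Qed.

Lemma xorv0 v : xorv v [ffun => false] = v.
Proof. by apply/ffunP => i; rewrite !ffunE addbF. Qed.
Lemma xor0v v : xorv [ffun => false] v = v.
Proof. by apply/ffunP => i; rewrite !ffunE. Qed.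
Lemma xorvv v : xorv v v = [ffun => false].
Proof. by apply/ffunP => i; rewrite !ffunE addbb. Qed.
Lemma xorvA u v w : xorv u (xorv v w) = xorv (xorv u v) w.
Proof. by apply/ffunP => i; rewrite !ffunE addbA. Qed.

Lemma pmulA p q r : pmul p (pmul q r) = pmul (pmul p q) r.
Proof.
case: p => [[a x] z]; case: q => [[b x'] z']; case: r => [[c x''] z''].
rewrite /pmul /phase /xbits /zbits /= !xorvA dotb_xorl dotb_xorr !two_xor.
by congr (_, _, _); apply: AC4.
Qed.

Lemma pmul1 p : pmul p (pone n) = p.
Proof.
case: p => [[a x] z]; rewrite /pmul /pone /phase /xbits /zbits /= dotb0r xorv0 xorv0.
by rewrite addr0 addr0.
Qed.

Lemma pmulV p : pmul p (pinv p) = pone n.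
Proof.
case: p => [[a x] z]; rewrite /pmul /pinv /pone /phase /xbits /zbits /= !xorvv.
by rewrite addrA subrr add0r dotbC two_dbl.
Qed.

Lemma unmul p g : pmul (pmul p g) (pinv g) = p.
Proof. by rewrite -pmulA pmulV pmul1. Qed.

Definition M p q : bool := dotb (zbits q) (xbits p).

Lemma M_mulr p q r : M p (pmul q r) = M p q (+) M p r.
Proof. by rewrite /M /= dotb_xorl. Qed.
Lemma M_mull p q r : M (pmul q r) p = M q p (+) M r p.
Proof. by rewrite /M /= dotb_xorr. Qed.
Lemma M_invr p q : M p (pinv q) = M p q. Proof. by []. Qed.
Lemma M_invl p q : M (pinv q) p = M q p. Proof. by []. Qed.
Lemma M_1r p : M p (pone n) = false. Proof. exact: dotb0l. Qed.
Lemma M_1l p : M (pone n) p = false. Proof. exact: dotb0r. Qed.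

Lemma M_reg p q : M p q = false -> pcommute (xpart p) (zpart q).
Proof.
rewrite /M /pcommute /pmul /xpart /zpart /phase /xbits /zbits /= => E.
by rewrite E dotb0l xorv0 xor0v xorv0 xor0v.
Qed.

Lemma comm_sym p q : pcommute p q -> M p q = M q p.
Proof.
rewrite /pcommute /pmul => /(congr1 (fun t => t.1.1)) /=.
rewrite /phase (addrC q.1.1) => /addrI /two_inj.
by rewrite /M => ->.
Qed.
End S.

Section G.
Variable n : nat.
Implicit Types (p q r g h k t : pauli n) (S : {set pauli n}) (L : seq (pauli n)).

Lemma gen_sub S S' p : (forall s, s \in S -> generated S' s) -> generated S p -> generated S' p.
Proof.
move=> H; elim => [|s Hs|a b _ Ha _ Hb|a _ Ha]; [exact: gen_one|exact: H|exact: gen_mul|exact: gen_inv].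
Qed.

Lemma gen_ind S (P : pauli n -> Prop) : P (pone n) -> (forall s, s \in S -> P s) ->
  (forall a b, P a -> P b -> P (pmul a b)) -> (forall a, P a -> P (pinv a)) ->
  forall p, generated S p -> P p.
Proof. by move=> H1 H2 H3 H4 p; elim => *; auto. Qed.

Lemma orth_gen S g : (forall s, s \in S -> M g s = false /\ M s g = false) ->
  forall t, generated S t -> M g t = false /\ M t g = false.
Proof.
move=> H; apply: gen_ind => //.
- by rewrite M_1r M_1l.
- by move=> a b [Ha1 Ha2] [Hb1 Hb2]; rewrite M_mulr M_mull Ha1 Ha2 Hb1 Hb2.
Qed.

Lemma sym_gen S : (forall p q, p \in S -> q \in S -> M p q = M q p) ->
  forall p q, generated S p -> generated S q -> M p q = M q p.
Proof.
move=> H.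
have H1 : forall p q, p \in S -> generated S q -> M p q = M q p.
  move=> p q Hp; move: q; apply: gen_ind.
  - by rewrite M_1r M_1l.
  - by move=> s Hs; apply: H.
  - by move=> a b Ea Eb; rewrite M_mulr M_mull Ea Eb.
  - by [].
move=> p q Hp Hq; move: p Hp; apply: gen_ind.
- by rewrite M_1r M_1l.
- by move=> s Hs; apply: H1.
- by move=> a b Ea Eb; rewrite M_mulr M_mull Ea Eb.
- by [].
Qed.

Lemma regular_add S g : regular S -> (forall t, t \in S -> M g t = false /\ M t g = false) ->
  regular (g |: S).
Proof.
move=> R H p q /setU1P [->|Hp] /setU1P [->|Hq] Hne.
- by rewrite eqxx in Hne.
- by apply: M_reg; case: (H q Hq).
- by apply: M_reg; case: (H p Hp).
- exact: R.
Qed.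

Definition Good L T1 T2 := regular T1 /\ regular T2 /\
  (forall t, generated (T1 :|: T2) t <-> generated [set x in L] t).

Lemma add_lemma L L2 g h T1 T2 : Good L2 T1 T2 ->
  (forall t, t \in L2 -> [/\ M g t = false, M t g = false, M h t = false & M t h = false]) ->
  (forall t, t \in g :: h :: L2 -> generated [set x in L] t) ->
  (forall l, l \in L -> generated [set x in g :: h :: L2] l) ->
  Good L (g |: T1) (h |: T2).
Proof.
move=> [R1 [R2 E]] Hor Hin Hout.
have orthg : forall t, generated [set x in L2] t -> M g t = false /\ M t g = false.
  apply: orth_gen => s; rewrite inE => /Hor [] *; done.
have orthh : forall t, generated [set x in L2] t -> M h t = false /\ M t h = false.
  apply: orth_gen => s; rewrite inE => /Hor [] *; done.
split; [|split].
- apply: regular_add => // t Ht; apply: orthg; apply/E; apply: gen_in; rewrite inE Ht //.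
- apply: regular_add => // t Ht; apply: orthh; apply/E; apply: gen_in; rewrite inE Ht orbT //.
- move=> t; split.
  + apply: gen_sub => s; rewrite !inE => /orP [/orP [/eqP -> | Hs] | /orP [/eqP -> | Hs]].
    * by apply: (Hin); rewrite !inE eqxx.
    * have : generated [set x in L2] s by apply/E; apply: gen_in; rewrite inE Hs.
      apply: gen_sub => s'; rewrite inE => Hs'; apply: (Hin); rewrite !inE Hs' !orbT //.
    * by apply: (Hin); rewrite !inE eqxx orbT.
    * have : generated [set x in L2] s by apply/E; apply: gen_in; rewrite inE Hs orbT.
      apply: gen_sub => s'; rewrite inE => Hs'; apply: (Hin); rewrite !inE Hs' !orbT //.
  + apply: gen_sub => l; rewrite inE => /(Hout); apply: gen_sub => s; rewrite inE !inE.
    case/orP => [/eqP -> | /orP [/eqP -> | Hs]].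
    * by apply: gen_in; rewrite !inE eqxx.
    * by apply: gen_in; rewrite !inE eqxx orbT.
    * have : generated (T1 :|: T2) s by apply/E; apply: gen_in; rewrite inE.
      apply: gen_sub => s'; rewrite inE => /orP [H|H]; apply: gen_in; rewrite !inE H ?orbT //.
Qed.
End G.

Section Main.
Variable n : nat.
Implicit Types (p q r g h t : pauli n) (S : {set pauli n}) (L : seq (pauli n)).

Lemma size_filter_lt (P : pred (pauli n)) L g : g \in L -> ~~ P g -> (size (filter P L) < size L)%N.
Proof.
move=> Hg HP; rewrite size_filter.
have := count_predC P L.
have : (0 < count (predC P) L)%N by rewrite -has_count; apply/hasP; exists g.
move=> H1 H2; rewrite -H2; rewrite -[X in (X < _)%N]addn0 ltn_add2l //.
Qed.

Lemma case3 L : (forall p q, p \in L -> q \in L -> M p q = false) -> Good L [set x in L] set0.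
Proof.
move=> H; split; [|split].
- by move=> p q; rewrite !inE => Hp Hq _; apply: M_reg; apply: H.
- by move=> p q; rewrite inE.
- by move=> t; rewrite setU0.
Qed.

Lemma main_ind k : forall L, (size L <= k)%N -> (forall p q, p \in L -> q \in L -> M p q = M q p) ->
  exists T1 T2, Good L T1 T2.
Proof.
elim: k => [|k IH] L.
  rewrite leqn0 => /nilP -> _; exists [set x in [::] : seq (pauli n)], set0.
  by apply: case3.
move=> Hsz Hsym.
have gL : forall t, t \in L -> generated [set x in L] t by move=> t Ht; apply: gen_in; rewrite inE.
have symG' : forall p q, generated [set x in L] p -> generated [set x in L] q -> M p q = M q p.
  by apply: sym_gen => p q; rewrite !inE; exact: Hsym.
case: (boolP (has (fun g => M g g) L)) => [/hasP [g Hg Mgg] | Hnd].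
  pose fix1 t := if M g t then pmul t g else t.
  pose L2 := map fix1 (filter (predC1 g) L).
  have fixG : forall t, t \in L -> generated [set x in L] (fix1 t).
    move=> t Ht; rewrite /fix1; case: (M g t); last exact: gL.
    by apply: gen_mul; apply: gL.
  have L2G : forall t, t \in L2 -> generated [set x in L] t.
    by move=> t /mapP [t' Ht' ->]; apply: fixG; move: Ht'; rewrite mem_filter => /andP [].
  have [T1 [T2 G2]] : exists T1 T2, Good L2 T1 T2.
    apply: IH.
      rewrite size_map -ltnS; apply: leq_trans Hsz; apply: (size_filter_lt Hg); by rewrite /= eqxx.
    by move=> p q Hp Hq; apply: symG'; apply: L2G.
  exists (g |: T1), (g |: T2); apply: add_lemma G2 _ _ _.
  - move=> t Ht; have Ho : M g t = false.
      move: Ht => /mapP [t' Ht' ->]; rewrite /fix1; case E: (M g t') => //.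
      by rewrite M_mulr E Mgg.
    have Ho' : M t g = false by rewrite (symG' _ _ (L2G _ Ht) (gL _ Hg)).
    by split.
  - move=> t; rewrite !inE => /orP [/eqP -> | /orP [/eqP -> | Ht]]; [exact: gL|exact: gL|exact: L2G].
  - move=> l Hl; case: (eqVneq l g) => [->|Hlg]; first by apply: gen_in; rewrite !inE eqxx.
    have Hf : fix1 l \in L2 by apply: map_f; rewrite mem_filter /= Hlg.
    have Gf : generated [set x in [:: g, g & L2]] (fix1 l) by apply: gen_in; rewrite !inE Hf !orbT.
    have Gg : generated [set x in [:: g, g & L2]] g by apply: gen_in; rewrite !inE eqxx.
    move: Gf; rewrite /fix1; case: (M g l) => // Gf.
    by rewrite -(unmul l g); apply: gen_mul => //; apply: gen_inv.
case: (boolP (has (fun g => has (fun h => M g h) L) L)) => [/hasP [g Hg /hasP [h Hh Mgh]] | Hno].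
  have Mgg : M g g = false by apply: negbTE; apply: contra Hnd => E; apply/hasP; exists g.
  have Mhh : M h h = false by apply: negbTE; apply: contra Hnd => E; apply/hasP; exists h.
  have Mhg : M h g = true by rewrite Hsym.
  have Hgh : g != h by apply: contraTneq Mgh => ->; rewrite Mhh.
  pose fix2 t := let t1 := if M t h then pmul t g else t in if M t g then pmul t1 h else t1.
  pose L2 := map fix2 (filter (fun x => (x != g) && (x != h)) L).
  have fixG : forall t, t \in L -> generated [set x in L] (fix2 t).
    move=> t Ht; rewrite /fix2; case: (M t h); case: (M t g);
      repeat (apply: gen_mul); by apply: gL.
  have L2G : forall t, t \in L2 -> generated [set x in L] t.
    by move=> t /mapP [t' Ht' ->]; apply: fixG; move: Ht'; rewrite mem_filter => /andP [].
  have [T1 [T2 G2]] : exists T1 T2, Good L2 T1 T2.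
    apply: IH.
      rewrite size_map -ltnS; apply: leq_trans Hsz; apply: (size_filter_lt Hg); by rewrite /= eqxx.
    by move=> p q Hp Hq; apply: symG'; apply: L2G.
  exists (g |: T1), (h |: T2); apply: add_lemma G2 _ _ _.
  - move=> t Ht; move: (Ht) => /mapP [t' Ht' Et].
    have Ht'L : t' \in L by move: Ht'; rewrite mem_filter => /andP [].
    have E1 : M g t' = M t' g by apply: Hsym.
    have E2 : M h t' = M t' h by apply: Hsym.
    have Ho : M g t = false /\ M h t = false.
      rewrite Et /fix2; case F1: (M t' h); case F2: (M t' g);
        rewrite ?M_mulr E1 E2 F1 F2 ?Mgg ?Mgh ?Mhg ?Mhh //.
    case: Ho => Ho1 Ho2.
    have Ho' : M t g = false by rewrite (symG' _ _ (L2G _ Ht) (gL _ Hg)).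
    have Ho'' : M t h = false by rewrite (symG' _ _ (L2G _ Ht) (gL _ Hh)).
    by split.
  - move=> t; rewrite !inE => /orP [/eqP -> | /orP [/eqP -> | Ht]]; [exact: gL|exact: gL|exact: L2G].
  - move=> l Hl; case: (eqVneq l g) => [->|Hlg]; first by apply: gen_in; rewrite !inE eqxx.
    case: (eqVneq l h) => [->|Hlh]; first by apply: gen_in; rewrite !inE eqxx orbT.
    have Hf : fix2 l \in L2 by apply: map_f; rewrite mem_filter /= Hlg Hlh.
    have Gf : generated [set x in [:: g, h & L2]] (fix2 l) by apply: gen_in; rewrite !inE Hf !orbT.
    have Gg : generated [set x in [:: g, h & L2]] g by apply: gen_in; rewrite !inE eqxx.
    have Gh : generated [set x in [:: g, h & L2]] h by apply: gen_in; rewrite !inE eqxx orbT.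
    pose l1 := if M l h then pmul l g else l.
    have G1 : generated [set x in [:: g, h & L2]] l1.
      move: Gf; rewrite /fix2 -/l1; case: (M l g) => // Gf.
      by rewrite -(unmul l1 h); apply: gen_mul => //; apply: gen_inv.
    move: G1; rewrite /l1; case: (M l h) => // G1.
    by rewrite -(unmul l g); apply: gen_mul => //; apply: gen_inv.
exists [set x in L], set0; apply: case3 => p q Hp Hq.
apply: negbTE; apply: contra Hno => E; apply/hasP; exists p => //; apply/hasP; exists q => //.
Qed.
End Main.

Theorem lemma9 (n : nat) (Theta : {set pauli n}) :
  (forall p q, p \in Theta -> q \in Theta -> pcommute p q) ->
  exists Theta1 Theta2 : {set pauli n},
    regular Theta1 /\ regular Theta2 /\
    (forall p, generated (Theta1 :|: Theta2) p <-> generated Theta p).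
Proof.
move=> Hc.
have Hs : forall p q, p \in enum Theta -> q \in enum Theta -> M p q = M q p.
  by move=> p q; rewrite !mem_enum => Hp Hq; apply: comm_sym; apply: Hc.
have [T1 [T2 G]] := @main_ind n (size (enum Theta)) (enum Theta) (leqnn _) Hs.
by exists T1, T2; rewrite -(set_enum Theta).
Qed.
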